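(* None of the groups $(\wr\mathbf{Z})^{\infty}$, $(\mathbf{Z}\wr)^{\infty}$, $(\wr\mathbf{Z}\wr)^{\infty}$ embeds in $W=\bigoplus_{i\in\mathbf{N}}W_i$.
   Context: Restricted wreath product: $A\wr\mathbf{Z}=(\bigoplus_{i\in\mathbf{Z}}A)\rtimes\mathbf{Z}$. $W_0=1$, $W_i=W_{i-1}\wr\mathbf{Z}$; $(\mathbf{Z}\wr)^{\infty}$ is the ascending union of the $W_i$ with $W_i$ embedded in $W_{i+1}$ as the index-$0$ base summand. For permutation groups $(K,X)$, $(L,Y)$, the permutation wreath product $K\wr L\le\mathrm{Sym}(X\times Y)$ is generated by $(x,y)\mapsto(x\kappa,y)$, $(x,y')\mapsto(x,y')$ for $y'\neq y$ ($\kappa\in K$, $y\in Y$) and $(x,y)\mapsto(x,y\lambda)$ ($\lambda\in L$); it is associative. $P_1=\mathbf{Z}$ on $\mathbf{Z}$ by translation, $P_{k+1}=\mathbf{Z}\wr P_k$ with $P_k$ the top group; $(\wr\mathbf{Z})^{\infty}$ is the ascending union of the $P_k$ (a permutation group). $(\wr\mathbf{Z}\wr)^{\infty}$ is the permutation wreath product $(\wr\mathbf{Z})^{\infty}\wr(\mathbf{Z}\wr)^{\infty}$, where $(\mathbf{Z}\wr)^{\infty}$ acts on itself by right multiplication. Equivalently (up to isomorphism): with $\alpha,\beta_0\in PL_o(I)$ given by $x\alpha=x/4$ on $[0,\frac14)$, $x-\frac3{16}$ on $[\frac14,\frac7{16})$, $4x-\frac32$ on $[\frac7{16},\frac9{16})$,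 $x+\frac3{16}$ on $[\frac9{16},\frac34)$, $\frac14x+\frac34$ on $[\frac34,1]$, and $x\beta_0=x$ on $[0,\frac7{16})$, $2x-\frac7{16}$ on $[\frac7{16},\frac{15}{32})$, $x+\frac1{32}$ on $[\frac{15}{32},\frac12)$, $\frac12x+\frac9{32}$ on $[\frac12,\frac9{16})$, $x$ on $[\frac9{16},1]$, and $\beta_k=\alpha^{-k}\beta_0\alpha^k$, the three groups are generated by $\{\beta_i:i<0\}$, $\{\beta_i:i\ge0\}$, $\{\beta_i:i\in\mathbf{Z}\}$ respectively. *)

(* Defs.v *)
From Stdlib Require Import Reals ZArith.

(* Groups presented concretely: an ambient type [gT], a membership     *)
(* predicate [gmem] cutting out the elements of the group, its identity *)
(* and its multiplication.  Only the multiplication is needed to speak *)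
(* of embeddings: a multiplicative map between groups is a group        *)
(* homomorphism.                                                       *)
Record grp := Grp {
  gT : Type;
  gmem : gT -> Prop;
  gone : gT;
  gmul : gT -> gT -> gT
}.

Definition embeds (G H : grp) : Prop :=
  exists f : gT G -> gT H,
    (forall x, gmem G x -> gmem H (f x)) /\
    (forall x y, gmem G x -> gmem G y -> f (gmul G x y) = gmul H (f x) (f y)) /\
    (forall x y, gmem G x -> gmem G y -> f x = f y -> x = y).

Definition trivial_grp : grp := Grp unit (fun _ => True) tt (fun _ _ => tt).

(* Restricted wreath product  A wr Z = (bigoplus_{i in Z} A) x| Z. *)
Definition wrZ (A : grp) : grp :=
  Grp ((Z -> gT A) * Z)
      (fun p => (forall i, gmem A (fst p i)) /\
                exists N : Z, forall i : Z, (N < Z.abs i)%Z -> fst p i = gone A)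
      (fun _ => gone A, 0%Z)
      (fun p q => (fun i => gmul A (fst p i) (fst q (i - snd p)%Z),
                   (snd p + snd q)%Z)).

Fixpoint Wn (n : nat) : grp :=
  match n with
  | O => trivial_grp
  | S n' => wrZ (Wn n')
  end.

Definition Wsum : grp :=
  Grp (forall i : nat, gT (Wn i))
      (fun x => (forall i, gmem (Wn i) (x i)) /\
                exists N : nat, forall i : nat, (N < i)%nat -> x i = gone (Wn i))
      (fun i => gone (Wn i))
      (fun x y i => gmul (Wn i) (x i) (y i)).

(* alpha, beta0 in PL_o(I), extended by the identity outside [0,1].    *)
Open Scope R_scope.

Definition alpha (x : R) : R :=
  if Rlt_dec x 0 then x
  else if Rlt_dec x (1/4) then x / 4
  else if Rlt_dec x (7/16) then x - 3/16
  else if Rlt_dec x (9/16) then 4 * x - 3/2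
  else if Rlt_dec x (3/4) then x + 3/16
  else if Rle_dec x 1 then (1/4) * x + 3/4
  else x.

Definition beta0 (x : R) : R :=
  if Rlt_dec x 0 then x
  else if Rlt_dec x (7/16) then x
  else if Rlt_dec x (15/32) then 2 * x - 7/16
  else if Rlt_dec x (1/2) then x + 1/32
  else if Rlt_dec x (9/16) then (1/2) * x + 9/32
  else x.

(* Permutations are written on the right, as in the paper:
   x (p q) = (x p) q.  An element of Sym(R) is a pair (p, p^-1). *)
Definition symT : Type := ((R -> R) * (R -> R))%type.

Definition sym_mul (p q : symT) : symT :=
  (fun x => fst q (fst p x), fun x => snd p (snd q x)).

Definition sym_one : symT := (fun x => x, fun x => x).

Definition sym_inv (p : symT) : symT := (snd p, fst p).

Definition is_sym (p : symT) : Prop :=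
  (forall x, snd p (fst p x) = x) /\ (forall x, fst p (snd p x) = x).

(* p is (the permutation) beta_k = alpha^{-k} beta0 alpha^k, i.e. as a
   function beta_k = alpha^k o beta0 o alpha^{-k}; equivalently
   beta_k o alpha^k = alpha^k o beta0 (k >= 0), and
   alpha^m o beta_{-m} = beta0 o alpha^m (m >= 0). *)
Definition is_beta (k : Z) (p : symT) : Prop :=
  is_sym p /\
  if Z_le_dec 0 k then
    forall x, fst p (Nat.iter (Z.to_nat k) alpha x)
              = Nat.iter (Z.to_nat k) alpha (beta0 x)
  else
    forall x, Nat.iter (Z.to_nat (- k)) alpha (fst p x)
              = beta0 (Nat.iter (Z.to_nat (- k)) alpha x).

Inductive gen (S : symT -> Prop) : symT -> Prop :=
  | gen_base : forall p, S p -> gen S p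
  | gen_one : gen S sym_one
  | gen_mul : forall p q, gen S p -> gen S q -> gen S (sym_mul p q)
  | gen_inv : forall p, gen S p -> gen S (sym_inv p).

Definition beta_grp (P : Z -> Prop) : grp :=
  Grp symT (gen (fun p => exists k, P k /\ is_beta k p)) sym_one sym_mul.

Close Scope R_scope.

Definition wrZ_inf : grp := beta_grp (fun k => (k < 0)%Z).
Definition Zwr_inf : grp := beta_grp (fun k => (0 <= k)%Z).
Definition wrZwr_inf : grp := beta_grp (fun _ => True).

(* Main.v *)
Require Import Defs.
From Stdlib Require Import Reals ZArith.
From Stdlib Require Import Lia Lra Classical FunctionalExtensionality.
Open Scope R_scope.

Definition alphainv (y : R) : R :=
  if Rlt_dec y 0 then y
  else if Rlt_dec y (1/16) then 4 * y
  else if Rlt_dec y (1/4) then y + 3/16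
  else if Rlt_dec y (3/4) then (y + 3/2) / 4
  else if Rlt_dec y (15/16) then y - 3/16
  else if Rle_dec y 1 then 4 * y - 3
  else y.

Definition beta0inv (y : R) : R :=
  if Rlt_dec y 0 then y
  else if Rlt_dec y (7/16) then y
  else if Rlt_dec y (1/2) then (y + 7/16) / 2
  else if Rlt_dec y (17/32) then y - 1/32
  else if Rlt_dec y (9/16) then 2 * y - 9/16
  else y.

Ltac dec_x x := repeat match goal with
  | |- context [Rlt_dec x ?b] => destruct (Rlt_dec x b)
  | |- context [Rle_dec x ?b] => destruct (Rle_dec x b) end.
Ltac dec_all := repeat match goal with
  | |- context [Rlt_dec ?a ?b] => destruct (Rlt_dec a b)
  | |- context [Rle_dec ?a ?b] => destruct (Rle_dec a b) end.

Lemma alphainv_alpha x : alphainv (alpha x) = x.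
Proof. unfold alpha; dec_x x; unfold alphainv; dec_all; lra. Qed.
Lemma alpha_alphainv x : alpha (alphainv x) = x.
Proof. unfold alphainv; dec_x x; unfold alpha; dec_all; lra. Qed.
Lemma beta0inv_beta0 x : beta0inv (beta0 x) = x.
Proof. unfold beta0; dec_x x; unfold beta0inv; dec_all; lra. Qed.
Lemma beta0_beta0inv x : beta0 (beta0inv x) = x.
Proof. unfold beta0inv; dec_x x; unfold beta0; dec_all; lra. Qed.

Lemma beta0_fix x : ~ (7/16 < x < 9/16) -> beta0 x = x.
Proof. intro H; unfold beta0; dec_all; lra. Qed.
Lemma alpha_pre x : 7/16 < x < 9/16 -> alpha ((x + 3/2)/4) = x.
Proof. intro H; unfold alpha; dec_all; lra. Qed.
Lemma beta0_r1 u : 31/64 < u < 33/64 -> 33/64 < beta0 u < 69/128.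
Proof. intro H; unfold beta0; dec_all; lra. Qed.
Lemma beta0_r2 u : 33/64 < u < 69/128 -> 69/128 < beta0 u < 141/256.
Proof. intro H; unfold beta0; dec_all; lra. Qed.

Lemma ev1 : beta0inv (1/2) = 15/32. Proof. unfold beta0inv; dec_all; lra. Qed.
Lemma ev2 : alphainv (15/32) = 63/128. Proof. unfold alphainv; dec_all; lra. Qed.
Lemma ev3 : beta0inv (63/128) = 119/256. Proof. unfold beta0inv; dec_all; lra. Qed.
Lemma ev4 : alpha (119/256) = 23/64. Proof. unfold alpha; dec_all; lra. Qed.
Lemma ev5 : beta0 (23/64) = 23/64. Proof. unfold beta0; dec_all; lra. Qed.
Lemma ev6 : alphainv (23/64) = 119/256. Proof. unfold alphainv; dec_all; lra. Qed.
Lemma ev7 : beta0 (119/256) = 63/128. Proof. unfold beta0; dec_all; lra. Qed.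
Lemma ev8 : alpha (63/128) = 15/32. Proof. unfold alpha; dec_all; lra. Qed.
Open Scope R_scope.

Notation itA n := (Nat.iter n alpha).
Notation itI n := (Nat.iter n alphainv).

Lemma itI_itA n x : itI n (itA n x) = x.
Proof. revert x; induction n; intro x; auto.
  rewrite (Nat.iter_succ_r n _ alpha). simpl. rewrite IHn. apply alphainv_alpha. Qed.
Lemma itA_itI n x : itA n (itI n x) = x.
Proof. revert x; induction n; intro x; auto.
  rewrite (Nat.iter_succ_r n _ alphainv). simpl. rewrite IHn. apply alpha_alphainv. Qed.
Lemma itA_inj n x y : itA n x = itA n y -> x = y.
Proof. intro H. rewrite <- (itI_itA n x), <- (itI_itA n y), H; auto. Qed.

Definition comm (x y : symT) : symT :=
  sym_mul (sym_mul (sym_mul (sym_inv x) (sym_inv y)) x) y.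

Lemma sym_ext p q : is_sym p -> is_sym q -> (forall x, fst p x = fst q x) -> p = q.
Proof.
  intros [Hp1 Hp2] [Hq1 Hq2] H. destruct p as [p p'], q as [q q']; simpl in *.
  assert (E : p = q) by (apply functional_extensionality; auto). subst q.
  f_equal. apply functional_extensionality; intro y.
  rewrite <- (Hq2 y) at 1. rewrite Hp1. reflexivity.
Qed.

Lemma is_sym_mul p q : is_sym p -> is_sym q -> is_sym (sym_mul p q).
Proof. intros [H1 H2] [H3 H4]; split; intro x; simpl; congruence. Qed.
Lemma is_sym_inv p : is_sym p -> is_sym (sym_inv p).
Proof. intros [H1 H2]; split; intro x; simpl; auto. Qed.
Lemma is_sym_one : is_sym sym_one.
Proof. split; reflexivity. Qed.
Lemma is_sym_comm a b : is_sym a -> is_sym b -> is_sym (comm a b).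
Proof. intros. unfold comm. repeat (apply is_sym_mul || apply is_sym_inv); auto. Qed.

Lemma comm_eq a b : is_sym a -> is_sym b ->
  sym_mul b (sym_mul a (comm a b)) = sym_mul a b.
Proof.
  intros Ha Hb. apply sym_ext.
  - apply is_sym_mul; auto. apply is_sym_mul; auto. apply is_sym_comm; auto.
  - apply is_sym_mul; auto.
  - intro x. destruct Ha as [Ha1 Ha2], Hb as [Hb1 Hb2]. simpl. rewrite Ha1, Hb1. reflexivity.
Qed.

Lemma comm_uniq a b c : is_sym a -> is_sym b ->
  sym_mul b (sym_mul a c) = sym_mul a b -> c = comm a b.
Proof.
  intros [Ha1 Ha2] [Hb1 Hb2] H.
  assert (H1 : forall z, fst c (fst a (fst b z)) = fst b (fst a z))
    by (intro z; exact (f_equal (fun p => fst p z) H)).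
  assert (H2 : forall z, snd b (snd a (snd c z)) = snd a (snd b z))
    by (intro z; exact (f_equal (fun p => snd p z) H)).
  destruct c as [c c']; simpl in *. unfold comm, sym_mul, sym_inv; simpl. f_equal.
  - apply functional_extensionality; intro w.
    transitivity (c (fst a (fst b (snd b (snd a w))))).
    { rewrite Hb2, Ha2. reflexivity. } apply H1.
  - apply functional_extensionality; intro w.
    rewrite <- H2. rewrite Hb2, Ha2. reflexivity.
Qed.

Lemma gen_mono (S S' : symT -> Prop) p : (forall q, S q -> S' q) -> gen S p -> gen S' p.
Proof. intros HS H; induction H; [apply gen_base; auto | apply gen_one | apply gen_mul | apply gen_inv]; auto. Qed.

Lemma gen_sym (S : symT -> Prop) p : (forall q, S q -> is_sym q) -> gen S p -> is_sym p.
Proof. intros HS H; induction H; auto using is_sym_one, is_sym_mul, is_sym_inv. Qed.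

Lemma gen_comm S a b : gen S a -> gen S b -> gen S (comm a b).
Proof. intros. unfold comm. repeat (apply gen_mul || apply gen_inv); auto. Qed.

Definition Fo (p : symT) (S : R -> Prop) := forall x, ~ S x -> fst p x = x /\ snd p x = x.

Lemma Fo_gen (Gs : symT -> Prop) S p : (forall q, Gs q -> Fo q S) -> gen Gs p -> Fo p S.
Proof.
  intros HG H; induction H.
  - auto.
  - intros x _; simpl; auto.
  - intros x Hx. destruct (IHgen1 x Hx), (IHgen2 x Hx). simpl. split; congruence.
  - intros x Hx. destruct (IHgen x Hx). simpl. auto.
Qed.

Lemma Fo_inv_fst p S x : is_sym p -> Fo p S -> S x -> S (fst p x).
Proof. intros [H1 H2] HF Hx. apply NNPP; intro N. destruct (HF _ N) as [_ E].
  rewrite H1 in E. apply N. rewrite <- E. exact Hx. Qed.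
Lemma Fo_inv_snd p S x : is_sym p -> Fo p S -> S x -> S (snd p x).
Proof. intros [H1 H2] HF Hx. apply NNPP; intro N. destruct (HF _ N) as [E _].
  rewrite H2 in E. apply N. rewrite <- E. exact Hx. Qed.
Open Scope R_scope.

Section U.
Variables (a s : symT) (J : R -> Prop).
Hypotheses (Ha : is_sym a) (Hs : is_sym s) (HF : Fo a J)
  (Hd : forall w, J w -> ~ J (snd s w)).
Let u := comm (sym_inv a) s.

Lemma G1f w : J w -> fst u w = fst a w.
Proof using Ha Hs HF Hd.
  intro Hw. destruct Hs as [Hs1 Hs2]. unfold u, comm; simpl.
  assert (J (fst a w)) by (apply Fo_inv_fst; auto).
  destruct (HF (snd s (fst a w))) as [_ E]; [apply Hd; auto|]. rewrite E, Hs2. reflexivity.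
Qed.
Lemma G1s w : J w -> snd u w = snd a w.
Proof using Ha Hs HF Hd.
  intro Hw. destruct Hs as [Hs1 Hs2]. unfold u, comm; simpl.
  destruct (HF (snd s w)) as [E _]; [apply Hd; auto|]. rewrite E, Hs2. reflexivity.
Qed.
Lemma G2 w : ~ J w -> ~ J (snd s w) -> fst u w = w /\ snd u w = w.
Proof using Ha Hs HF Hd.
  intros H1 H2. destruct Hs as [Hs1 Hs2]. unfold u, comm; simpl.
  destruct (HF w H1) as [E1 E2]. destruct (HF _ H2) as [E3 E4].
  rewrite E1, E4, Hs2, E3, Hs2, E2. auto.
Qed.
Lemma G3 w : J (snd s w) -> J (snd s (snd u w)).
Proof using Ha Hs HF Hd.
  intro Hw. destruct Hs as [Hs1 Hs2]. unfold u, comm; simpl.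
  assert (HJ : J (fst a (snd s w))) by (apply Fo_inv_fst; auto).
  assert (HN : ~ J (fst s (fst a (snd s w)))).
  { intro C. apply (Hd _ C). rewrite Hs1. auto. }
  destruct (HF _ HN) as [_ E]. rewrite E, Hs1. auto.
Qed.
End U.

Lemma main_comm a b t J : is_sym a -> is_sym b -> is_sym t -> Fo a J -> Fo b J ->
  (forall w, J w -> ~ J (snd t w)) ->
  (forall w, J w -> ~ J (snd t (snd t w))) ->
  (forall w, J (snd t w) -> ~ J (snd t (snd t w))) ->
  comm (comm (sym_inv a) t) (comm (sym_inv b) (sym_mul t t)) = comm a b.
Proof.
  intros Ha Hb Ht HFa HFb D1 D2 D3.
  assert (Htt : is_sym (sym_mul t t)) by (apply is_sym_mul; auto).
  assert (Hu : is_sym (comm (sym_inv a) t)) by (apply is_sym_comm; auto using is_sym_inv).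
  assert (Hv : is_sym (comm (sym_inv b) (sym_mul t t))) by (apply is_sym_comm; auto using is_sym_inv).
  apply sym_ext; [apply is_sym_comm; auto | apply is_sym_comm; auto |].
  intro z.
  change (fst (comm (sym_inv b) (sym_mul t t)) (fst (comm (sym_inv a) t)
     (snd (comm (sym_inv b) (sym_mul t t)) (snd (comm (sym_inv a) t) z)))
     = fst b (fst a (snd b (snd a z)))).
  destruct (classic (J z)) as [Jz|nJz].
  - rewrite (G1s a t J Ha Ht HFa D1 z Jz).
    assert (J1 : J (snd a z)) by (apply Fo_inv_snd; auto).
    rewrite (G1s b (sym_mul t t) J Hb Htt HFb D2 _ J1).
    assert (J2 : J (snd b (snd a z))) by (apply Fo_inv_snd; auto).
    rewrite (G1f a t J Ha Ht HFa D1 _ J2).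
    assert (J3 : J (fst a (snd b (snd a z)))) by (apply Fo_inv_fst; auto).
    rewrite (G1f b (sym_mul t t) J Hb Htt HFb D2 _ J3).
    reflexivity.
  - destruct (HFa z nJz) as [Ea1 Ea2]. destruct (HFb z nJz) as [Eb1 Eb2].
    rewrite Ea2, Eb2, Ea1, Eb1.
    destruct (classic (J (snd t z))) as [K1|nK1].
    + assert (K1' := G3 a t J Ha Ht HFa D1 z K1).
      assert (nJ : ~ J (snd (comm (sym_inv a) t) z)) by (intro C; exact (D1 _ C K1')).
      assert (nK2 : ~ J (snd t (snd t (snd (comm (sym_inv a) t) z)))) by (apply D3; auto).
      destruct (G2 b (sym_mul t t) J Hb Htt HFb D2 _ nJ nK2) as [_ E].
      rewrite E.
      destruct Hu as [_ Hu2]. rewrite Hu2.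
      assert (nK2z : ~ J (snd t (snd t z))) by (apply D3; auto).
      destruct (G2 b (sym_mul t t) J Hb Htt HFb D2 _ nJz nK2z) as [E' _].
      exact E'.
    + destruct (G2 a t J Ha Ht HFa D1 z nJz nK1) as [Eu1 Eu2].
      rewrite Eu2.
      destruct (classic (J (snd t (snd t z)))) as [K2|nK2].
      * assert (K2' := G3 b (sym_mul t t) J Hb Htt HFb D2 z K2).
        assert (nJ : ~ J (snd (comm (sym_inv b) (sym_mul t t)) z)) by (intro C; exact (D2 _ C K2')).
        assert (nK1' : ~ J (snd t (snd (comm (sym_inv b) (sym_mul t t)) z))) by (intro C; exact (D3 _ C K2')).
        destruct (G2 a t J Ha Ht HFa D1 _ nJ nK1') as [E _].
        rewrite E. destruct Hv as [_ Hv2]. apply Hv2.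
      * destruct (G2 b (sym_mul t t) J Hb Htt HFb D2 z nJz nK2) as [Ev1 Ev2].
        rewrite Ev2, Eu1, Ev1. reflexivity.
Qed.
Close Scope R_scope.

Section Der.
Variable T : Type.
Variable mul : T -> T -> T.
Inductive Mc (X : T -> Prop) : T -> Prop :=
  | Mc_base x : X x -> Mc X x
  | Mc_mul x y : Mc X x -> Mc X y -> Mc X (mul x y).
Definition Cm (X : T -> Prop) (c : T) : Prop :=
  exists a b, X a /\ X b /\ mul b (mul a c) = mul a b.
Fixpoint Dk (P : T -> Prop) (k : nat) : T -> Prop :=
  match k with O => P | S k => Mc (Cm (Dk P k)) end.

Lemma Mc_mono (X Y : T -> Prop) x : (forall z, X z -> Y z) -> Mc X x -> Mc Y x.
Proof. intros H M; induction M; [apply Mc_base; auto | apply Mc_mul; auto]. Qed.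
Lemma Cm_mono (X Y : T -> Prop) x : (forall z, X z -> Y z) -> Cm X x -> Cm Y x.
Proof. intros H (a & b & Ha & Hb & E). exists a, b; auto. Qed.
Lemma Dk_mono (P Q : T -> Prop) k x : (forall z, P z -> Q z) -> Dk P k x -> Dk Q k x.
Proof. revert x; induction k; simpl; intros x H D; auto.
  eapply Mc_mono; [|exact D]. intros z. apply Cm_mono. intros; apply IHk; auto. Qed.
End Der.
Arguments Mc {T} mul X _.
Arguments Mc_base {T mul X} x _.
Arguments Mc_mul {T mul X} x y _ _.
Arguments Cm {T} mul X c.
Arguments Dk {T} mul P k _.

Lemma Dk_hom {T U : Type} (mT : T -> T -> T) (mU : U -> U -> U) (f : T -> U)
  (Sd : T -> Prop) (P : T -> Prop) (Q : U -> Prop) :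
  (forall x y, Sd x -> Sd y -> f (mT x y) = mU (f x) (f y)) ->
  (forall x y, Sd x -> Sd y -> Sd (mT x y)) ->
  (forall k x, Dk mT P k x -> Sd x) ->
  (forall x, P x -> Q (f x)) ->
  forall k x, Dk mT P k x -> Dk mU Q k (f x).
Proof.
  intros Hm Hcl HS HP k. induction k; simpl; intros x D; auto.
  assert (HS' : forall z, Mc mT (Cm mT (Dk mT P k)) z -> Sd z) by (intro z; exact (HS (S k) z)).
  induction D as [c Hc | x y Dx IHx Dy IHy].
  - apply Mc_base. destruct Hc as (a & b & Ha & Hb & E).
    exists (f a), (f b). split; [auto|split; [auto|]].
    assert (Sa : Sd a) by (apply (HS k); auto). assert (Sb : Sd b) by (apply (HS k); auto).
    assert (Sc : Sd c) by (apply HS'; apply Mc_base; exists a, b; auto).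
    rewrite <- Hm, <- Hm, <- Hm, E; auto.
  - rewrite Hm by (apply HS'; auto). apply Mc_mul; auto.
Qed.
Close Scope R_scope.

Lemma wr_step (A : grp) (P : gT (wrZ A) -> Prop) k y :
  Dk (gmul (wrZ A)) P (S k) y ->
  snd y = 0%Z /\ forall j, Dk (gmul A) (fun _ => True) k (fst y j).
Proof.
  revert y. induction k; intros y D.
  - split; [|intros; exact I].
    simpl in D. induction D as [c (a & b & Ha & Hb & E) | x z Dx IHx Dz IHz].
    + apply (f_equal snd) in E. simpl in E. lia.
    + simpl. lia.
  - change (Mc (gmul (wrZ A)) (Cm (gmul (wrZ A)) (Dk (gmul (wrZ A)) P (S k))) y) in D.
    induction D as [c (a & b & Ha & Hb & E) | x z Dx IHx Dz IHz].
    + destruct (IHk a Ha) as [sa Ea]. destruct (IHk b Hb) as [sb Eb].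
      split.
      * apply (f_equal snd) in E. simpl in E. lia.
      * intro j. apply Mc_base. exists (fst a j), (fst b j).
        split; [apply Ea|split; [apply Eb|]].
        apply (f_equal (fun p => fst p j)) in E. simpl in E.
        rewrite sa, sb in E. rewrite !Z.sub_0_r in E. exact E.
    + destruct IHx as [sx Ex]. destruct IHz as [sz Ez]. split.
      * simpl. lia.
      * intro j. simpl. rewrite sx, Z.sub_0_r. apply Mc_mul; [apply Ex|apply Ez].
Qed.

Lemma Wn_triv n : forall k P y, (n <= k)%nat -> Dk (gmul (Wn n)) P k y -> y = gone (Wn n).
Proof.
  induction n; intros k P y Hk D.
  - destruct y; reflexivity.
  - destruct k as [|k]; [lia|].
    destruct (wr_step (Wn n) P k y D) as [s E].
    destruct y as [yf ym]. simpl in s, E |- *. subst ym. f_equal.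
    apply functional_extensionality; intro j. apply (IHn k (fun _ => True)); [lia|]. apply E.
Qed.

Lemma Wn_one_l n x : gmul (Wn n) (gone (Wn n)) x = x.
Proof.
  induction n.
  - destruct x; reflexivity.
  - destruct x as [xf xm]. simpl. f_equal.
    apply functional_extensionality; intro j. rewrite Z.sub_0_r. apply IHn.
Qed.
Lemma Wn_one_r n x : gmul (Wn n) x (gone (Wn n)) = x.
Proof.
  induction n.
  - destruct x; reflexivity.
  - destruct x as [xf xm]. simpl. f_equal.
    + apply functional_extensionality; intro j. apply IHn.
    + lia.
Qed.

Lemma Dk_gen (Sg : symT -> Prop) : (forall q, Sg q -> is_sym q) ->
  forall k h, Dk sym_mul (gen Sg) k h -> gen Sg h.
Proof.
  intros HS k. induction k; simpl; intros h D; auto.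
  induction D as [c (a & b & Ha & Hb & E) | x y Dx IHx Dy IHy].
  - apply IHk in Ha. apply IHk in Hb.
    rewrite (comm_uniq a b c (gen_sym _ _ HS Ha) (gen_sym _ _ HS Hb) E).
    apply gen_comm; auto.
  - apply gen_mul; auto.
Qed.

Lemma no_embed (Sg : symT -> Prop) : (forall q, Sg q -> is_sym q) ->
  (exists g, gen Sg g /\ forall N, exists k h, (N <= k)%nat /\
      Dk sym_mul (gen Sg) k h /\ sym_mul g h <> sym_mul h g) ->
  ~ embeds (Grp symT (gen Sg) sym_one sym_mul) Wsum.
Proof.
  intros HS [g [Hg Hall]] [f [Hmem [Hmul Hinj]]]. simpl in *.
  destruct (Hmem g Hg) as [_ [N HN]].
  destruct (Hall N) as [k [h [Hk [Hh Hne]]]].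
  assert (Hh' : gen Sg h) by (eapply Dk_gen; eauto).
  assert (FD : Dk (gmul Wsum) (fun _ => True) k (f h)).
  { apply (Dk_hom sym_mul (gmul Wsum) f (gen Sg) (gen Sg)); auto.
    - intros; apply gen_mul; auto.
    - intros; eapply Dk_gen; eauto. }
  assert (Comp : forall i, Dk (gmul (Wn i)) (fun _ => True) k (f h i)).
  { intro i. apply (Dk_hom (gmul Wsum) (gmul (Wn i)) (fun x => x i) (fun _ => True) (fun _ => True)); auto. }
  apply Hne. apply Hinj; try (apply gen_mul; auto).
  rewrite Hmul, Hmul by auto. simpl.
  apply functional_extensionality_dep; intro i.
  destruct (Compare_dec.le_lt_dec i N) as [Hi|Hi].
  - rewrite (Wn_triv i k (fun _ => True) (f h i)) by (auto; lia).
    rewrite Wn_one_l, Wn_one_r. reflexivity.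
  - rewrite (HN i Hi). rewrite Wn_one_l, Wn_one_r. reflexivity.
Qed.
Open Scope R_scope.

Definition J0 (x : R) : Prop := 7/16 < x < 9/16.
Definition Jn (n : nat) (y : R) : Prop := exists x, J0 x /\ y = itA n x.
Definition Hn (n : nat) : symT -> Prop :=
  gen (fun p => exists i, (i <= n)%nat /\ is_beta (Z.of_nat i) p).

Definition bpos (k : nat) : symT :=
  (fun x => itA k (beta0 (itI k x)), fun x => itA k (beta0inv (itI k x))).
Definition bm1 : symT :=
  (fun x => alphainv (beta0 (alpha x)), fun x => alphainv (beta0inv (alpha x))).

Lemma beta_pos i p : is_beta (Z.of_nat i) p -> forall x, fst p (itA i x) = itA i (beta0 x).
Proof.
  intros [_ H]. destruct (Z_le_dec 0 (Z.of_nat i)) as [_|C]; [|lia].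
  rewrite Nat2Z.id in H. exact H.
Qed.

Lemma is_beta_bpos k : is_beta (Z.of_nat k) (bpos k).
Proof.
  split.
  - split; intro x; simpl; rewrite itI_itA; [rewrite beta0inv_beta0|rewrite beta0_beta0inv]; apply itA_itI.
  - destruct (Z_le_dec 0 (Z.of_nat k)) as [_|C]; [|lia]. rewrite Nat2Z.id.
    intro x; simpl. rewrite itI_itA. reflexivity.
Qed.

Lemma is_beta_bm1 : is_beta (-1) bm1.
Proof.
  split.
  - split; intro x; simpl; rewrite alpha_alphainv;
      [rewrite beta0inv_beta0|rewrite beta0_beta0inv]; apply alphainv_alpha.
  - destruct (Z_le_dec 0 (-1)) as [C|_]; [lia|]. simpl. intro x.
    rewrite alpha_alphainv. reflexivity.
Qed.

Lemma Jn_succ n y : Jn n y -> Jn (S n) y.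
Proof.
  intros [x [Hx E]]. exists ((x + 3/2)/4). split.
  - unfold J0 in *; lra.
  - rewrite Nat.iter_succ_r, alpha_pre; auto.
Qed.
Lemma Jn_le i n y : (i <= n)%nat -> Jn i y -> Jn n y.
Proof. intro H; induction H; auto using Jn_succ. Qed.

Lemma Fo_beta i n p : (i <= n)%nat -> is_beta (Z.of_nat i) p -> Fo p (Jn n).
Proof.
  intros Hi Hb y Hy.
  assert (E : fst p y = y).
  { rewrite <- (itA_itI i y). rewrite (beta_pos i p Hb). f_equal. apply beta0_fix.
    intro C. apply Hy. apply (Jn_le i n); auto. exists (itI i y). split; auto.
    rewrite itA_itI; auto. }
  split; auto. destruct Hb as [[H1 H2] _]. rewrite <- E at 1. apply H1.
Qed.

Lemma Fo_Hn n p : Hn n p -> Fo p (Jn n).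
Proof. apply Fo_gen. intros q (i & Hi & Hb). eapply Fo_beta; eauto. Qed.

Lemma Hn_sym n p : Hn n p -> is_sym p.
Proof. apply gen_sym. intros q (i & _ & Hb). apply Hb. Qed.

Lemma Hn_mono n m p : (n <= m)%nat -> Hn n p -> Hn m p.
Proof. intro H. apply gen_mono. intros q (i & Hi & Hb). exists i; split; auto; lia. Qed.

Lemma Jn_repr n y : Jn n y -> exists u, 31/64 < u < 33/64 /\ y = itA (S n) u.
Proof.
  intros [x [Hx E]]. exists ((x + 3/2)/4). split; [unfold J0 in *; lra|].
  rewrite Nat.iter_succ_r, alpha_pre; auto.
Qed.

Section Disj.
Variables (n : nat) (t : symT).
Hypothesis Ht : is_beta (Z.of_nat (S n)) t.

Lemma T1_repr y : Jn n (snd t y) -> exists u, 33/64 < u < 69/128 /\ y = itA (S n) u.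
Proof.
  intro H. destruct (Jn_repr n _ H) as [u [Hu E]].
  exists (beta0 u). split; [apply beta0_r1; auto|].
  rewrite <- (beta_pos _ _ Ht), <- E. destruct Ht as [[_ H2] _]. auto.
Qed.
Lemma T2_repr y : Jn n (snd t (snd t y)) -> exists u, 69/128 < u < 141/256 /\ y = itA (S n) u.
Proof.
  intro H. destruct (T1_repr _ H) as [u [Hu E]].
  exists (beta0 u). split; [apply beta0_r2; auto|].
  rewrite <- (beta_pos _ _ Ht), <- E. destruct Ht as [[_ H2] _]. auto.
Qed.

Lemma D1 w : Jn n w -> ~ Jn n (snd t w).
Proof.
  intros H1 H2. destruct (Jn_repr _ _ H1) as [u1 [Hu1 E1]]. destruct (T1_repr _ H2) as [u2 [Hu2 E2]].
  rewrite E1 in E2. apply itA_inj in E2. lra.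
Qed.
Lemma D2 w : Jn n w -> ~ Jn n (snd t (snd t w)).
Proof.
  intros H1 H2. destruct (Jn_repr _ _ H1) as [u1 [Hu1 E1]]. destruct (T2_repr _ H2) as [u2 [Hu2 E2]].
  rewrite E1 in E2. apply itA_inj in E2. lra.
Qed.
Lemma D3 w : Jn n (snd t w) -> ~ Jn n (snd t (snd t w)).
Proof.
  intros H1 H2. destruct (T1_repr _ H1) as [u1 [Hu1 E1]]. destruct (T2_repr _ H2) as [u2 [Hu2 E2]].
  rewrite E1 in E2. apply itA_inj in E2. lra.
Qed.
End Disj.

Lemma Hn_beta n : Hn n (bpos n).
Proof. apply gen_base. exists n; split; auto. apply is_beta_bpos. Qed.

Lemma tower_base n c : Cm sym_mul (Hn n) c -> Cm sym_mul (Dk sym_mul (Hn (S n)) 1) c.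
Proof.
  intros (a & b & Ha & Hb & E).
  set (t := bpos (S n)).
  assert (Htb : is_beta (Z.of_nat (S n)) t) by apply is_beta_bpos.
  assert (Ht : is_sym t) by apply Htb.
  assert (HtH : Hn (S n) t) by apply Hn_beta.
  assert (Sa : is_sym a) by (eapply Hn_sym; eauto).
  assert (Sb : is_sym b) by (eapply Hn_sym; eauto).
  exists (comm (sym_inv a) t), (comm (sym_inv b) (sym_mul t t)).
  split; [|split].
  - apply Mc_base. exists (sym_inv a), t. split; [apply gen_inv; eapply Hn_mono; [|eauto]; lia|].
    split; auto. apply comm_eq; auto using is_sym_inv.
  - apply Mc_base. exists (sym_inv b), (sym_mul t t).
    split; [apply gen_inv; eapply Hn_mono; [|eauto]; lia|].
    split; [apply gen_mul; auto|]. apply comm_eq; auto using is_sym_inv, is_sym_mul.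
  - rewrite (comm_uniq a b c Sa Sb E).
    rewrite <- (main_comm a b t (Jn n) Sa Sb Ht (Fo_Hn _ _ Ha) (Fo_Hn _ _ Hb)
                  (D1 n t Htb) (D2 n t Htb) (D3 n t Htb)).
    apply comm_eq; apply is_sym_comm; auto using is_sym_inv, is_sym_mul.
Qed.

Lemma tower k n x : (1 <= k)%nat -> Dk sym_mul (Hn n) k x -> Dk sym_mul (Hn (S n)) (S k) x.
Proof.
  intros Hk. revert x. induction Hk; intros x D.
  - simpl in D |- *. eapply Mc_mono; [|exact D]. intros z Hz.
    apply tower_base; auto.
  - simpl in D |- *. eapply Mc_mono; [|exact D]. intros z Hz.
    eapply Cm_mono; [|exact Hz]. intros w Hw. apply IHHk. exact Hw.
Qed.

Definition c0 : symT := comm (bpos 0) (bpos 1).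

Lemma c0_D k : (1 <= k)%nat -> Dk sym_mul (Hn k) k c0.
Proof.
  intro Hk. induction Hk.
  - simpl. apply Mc_base. exists (bpos 0), (bpos 1).
    split; [eapply Hn_mono; [|apply Hn_beta]; lia|].
    split; [apply Hn_beta|]. apply comm_eq; apply is_beta_bpos.
  - apply tower; auto.
Qed.

Lemma c0_H : Hn 1 c0.
Proof. apply gen_comm; [eapply Hn_mono; [|apply Hn_beta]; lia| apply Hn_beta]. Qed.

Lemma c0_moves : fst c0 (1/2) <> 1/2.
Proof.
  unfold c0, comm, bpos; simpl.
  rewrite ev1, ev2, ev3, ev4, ev5, ev6, ev7, ev8. lra.
Qed.

Lemma noncomm h g J x : Fo h J -> fst h x <> x -> is_sym g ->
  (forall w, J w -> ~ J (snd g w)) -> sym_mul g h <> sym_mul h g.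
Proof.
  intros HF Hx [G1 G2] HD E.
  assert (Ex : fst h (fst g x) = fst g (fst h x)) by exact (f_equal (fun p => fst p x) E).
  assert (Jx : J x) by (apply NNPP; intro C; apply Hx; apply (HF x C)).
  assert (Ny : ~ J (fst g x)) by (intro C; apply (HD _ C); rewrite G1; auto).
  destruct (HF _ Ny) as [Ey _]. rewrite Ey in Ex.
  apply Hx. rewrite <- (G1 (fst h x)), <- Ex, G1. reflexivity.
Qed.

Lemma c0_noncomm n t : (1 <= n)%nat -> is_beta (Z.of_nat (S n)) t ->
  sym_mul t c0 <> sym_mul c0 t.
Proof.
  intros Hn Ht. apply (noncomm c0 t (Jn n) (1/2)).
  - apply Fo_Hn. eapply Hn_mono; [|apply c0_H]; auto.
  - apply c0_moves.
  - apply Ht.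
  - apply D1; auto.
Qed.
Open Scope R_scope.

Definition cj (F G : R -> R) (p : symT) : symT :=
  (fun x => G (fst p (F x)), fun x => G (snd p (F x))).

Lemma cj_mul F G p q : (forall y, F (G y) = y) ->
  cj F G (sym_mul p q) = sym_mul (cj F G p) (cj F G q).
Proof. intro H. unfold cj, sym_mul; simpl. f_equal; apply functional_extensionality; intro x; rewrite H; auto. Qed.

Lemma cj_one F G : (forall y, G (F y) = y) -> cj F G sym_one = sym_one.
Proof. intro H. unfold cj, sym_one; simpl. f_equal; apply functional_extensionality; intro x; auto. Qed.

Lemma cj_sym F G p : (forall y, F (G y) = y) -> (forall y, G (F y) = y) -> is_sym p -> is_sym (cj F G p).
Proof. intros H1 H2 [P1 P2]. split; intro x; simpl; rewrite H1; [rewrite P1|rewrite P2]; auto. Qed.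

Lemma cj_cj F G p : (forall y, F (G y) = y) -> (forall y, G (F y) = y) -> cj G F (cj F G p) = p.
Proof. intros H1 H2. destruct p as [p p']. unfold cj; simpl. f_equal; apply functional_extensionality; intro x; rewrite !H1; auto. Qed.

Lemma beta_cj_neg i M p : (i < M)%nat -> is_beta (Z.of_nat i) p ->
  is_beta (Z.of_nat i - Z.of_nat M)%Z (cj (itA M) (itI M) p).
Proof.
  intros HiM Hb. split.
  - apply cj_sym; [apply itA_itI|apply itI_itA|apply Hb].
  - destruct (Z_le_dec 0 (Z.of_nat i - Z.of_nat M)) as [C|_]; [lia|].
    replace (Z.to_nat (- (Z.of_nat i - Z.of_nat M))) with (M - i)%nat by lia.
    set (m := (M - i)%nat). replace M with (i + m)%nat by lia.
    intro x. unfold cj; cbn [fst]. rewrite (Nat.iter_add i m R alpha x), (beta_pos i p Hb).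
    rewrite (Nat.add_comm i m), (Nat.iter_add m i R alphainv), itI_itA, itA_itI. reflexivity.
Qed.

Lemma beta_cj_pos m g : is_beta (-1) g ->
  is_beta (Z.of_nat m) (cj (itI (S m)) (itA (S m)) g).
Proof.
  intros [Hs Hb]. split.
  - apply cj_sym; [apply itI_itA|apply itA_itI|auto].
  - destruct (Z_le_dec 0 (-1)) as [C|_] in Hb; [lia|]. simpl in Hb.
    destruct (Z_le_dec 0 (Z.of_nat m)) as [_|C]; [|lia]. rewrite Nat2Z.id.
    intro x. unfold cj; cbn [fst]. change (Nat.iter (S m) alphainv ?y) with (alphainv (Nat.iter m alphainv y)). rewrite itI_itA, (Nat.iter_succ_r m R alpha), Hb, alpha_alphainv. reflexivity.
Qed.

Definition Swrz : symT -> Prop := fun p => exists k, (k < 0)%Z /\ is_beta k p.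
Definition Szwr : symT -> Prop := fun p => exists k, (0 <= k)%Z /\ is_beta k p.
Definition Sall : symT -> Prop := fun p => exists k, True /\ is_beta k p.

Lemma cj_gen n p : Hn n p -> gen Swrz (cj (itA (S n)) (itI (S n)) p).
Proof.
  intro H; induction H.
  - destruct H as (i & Hi & Hb). apply gen_base.
    eexists; split; [|apply (beta_cj_neg i (S n)); auto; lia]. lia.
  - rewrite cj_one by apply itI_itA. apply gen_one.
  - rewrite cj_mul by apply itA_itI. apply gen_mul; auto.
  - change (gen Swrz (sym_inv (cj (itA (S n)) (itI (S n)) p))). apply gen_inv; auto.
Qed.

Lemma final_zwr : ~ embeds Zwr_inf Wsum.
Proof.
  apply (no_embed Szwr). { intros q (k & _ & Hb); apply Hb. }
  exists (bpos 2). split.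
  - apply gen_base. exists 2%Z. split; [lia|]. apply (is_beta_bpos 2).
  - intro N. exists (S N), c0. split; [lia|]. split.
    + eapply Dk_mono; [|apply c0_D; lia]. intros z. apply gen_mono.
      intros q (i & _ & Hb). exists (Z.of_nat i). split; [lia|auto].
    + apply (c0_noncomm 1); [lia|]. apply (is_beta_bpos 2).
Qed.

Lemma final_all : ~ embeds wrZwr_inf Wsum.
Proof.
  apply (no_embed Sall). { intros q (k & _ & Hb); apply Hb. }
  exists (bpos 2). split.
  - apply gen_base. exists 2%Z. split; [auto|]. apply (is_beta_bpos 2).
  - intro N. exists (S N), c0. split; [lia|]. split.
    + eapply Dk_mono; [|apply c0_D; lia]. intros z. apply gen_mono.
      intros q (i & _ & Hb). exists (Z.of_nat i). split; auto.
    + apply (c0_noncomm 1); [lia|]. apply (is_beta_bpos 2).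
Qed.

Lemma final_wrz : ~ embeds wrZ_inf Wsum.
Proof.
  apply (no_embed Swrz). { intros q (k & _ & Hb); apply Hb. }
  exists bm1. split.
  - apply gen_base. exists (-1)%Z. split; [lia|]. apply is_beta_bm1.
  - intro N. set (k := S (S N)).
    exists k, (cj (itA (S k)) (itI (S k)) c0). split; [lia|]. split.
    + apply (Dk_hom sym_mul sym_mul (cj (itA (S k)) (itI (S k))) (fun _ => True) (Hn k)).
      * intros; apply cj_mul, itA_itI.
      * auto.
      * auto.
      * apply cj_gen.
      * apply c0_D. lia.
    + intro E. apply (f_equal (cj (itI (S k)) (itA (S k)))) in E.
      rewrite !cj_mul in E by apply itI_itA.
      rewrite cj_cj in E by (apply itA_itI || apply itI_itA).
      revert E. apply (c0_noncomm (S N)); [lia|].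
      apply beta_cj_pos. apply is_beta_bm1.
Qed.

Close Scope R_scope.

Theorem lemma21 :
  ~ embeds wrZ_inf Wsum /\ ~ embeds Zwr_inf Wsum /\ ~ embeds wrZwr_inf Wsum.
Proof.
  split; [exact final_wrz | split; [exact final_zwr | exact final_all]].
Qed.
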